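(* Even for two teams with identical valuations and nonnegative-value players, there does not necessarily exist an allocation that is both EF1 and player-Pareto optimal.
   Context: Setting: teams $T=[n]$, players $P=\{p_1,\dots,p_m\}$. Each player $p$ has a complete, transitive weak preference $\succsim_p$ over $T$. Each team $i$ has an additive valuation $v_i:2^P\to\mathbb{R}$, $v_i(S)=\sum_{p\in S}v_i(p)$; nonnegative-value players means $v_i(p)\ge0$ for all $i,p$; identical valuations means $v_1=v_2=\dots=v_n$. An allocation is an ordered partition $(A_1,\dots,A_n)$ of $P$. $A$ is EF1 if for all distinct $i,j$ there are $X\subseteq A_i$, $Y\subseteq A_j$ with $|X\cup Y|\le1$ and $v_i(A_i\setminus X)\ge v_i(A_j\setminus Y)$. A player is better (worse) off in $A'$ than in $A$ if she strictly prefers (strictly disprefers) her team in $A'$ to her team in $A$. $A$ is player-Pareto dominated by $A'$ if no player is worse off and at least one player is better off; $A$ is player-Pareto optimal (player-PO) if it is not player-Pareto dominated by any allocation. *)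

(* Defs.v *)
From HB Require Import structures.
From mathcomp Require Import all_boot all_order all_algebra.
From mathcomp Require Import reals.
Set Implicit Arguments. Unset Strict Implicit. Unset Printing Implicit Defensive.
Import Order.TTheory GRing.Theory Num.Theory.
Local Open Scope ring_scope.

Section Alloc.
Variables (R : realType) (n m : nat).

(* pref p a b : player p weakly prefers team a to team b *)
Definition weak_order_prefs (pref : 'I_m -> rel 'I_n) : Prop :=
  forall p, (forall a b, pref p a b || pref p b a) /\
            (forall a b c, pref p a b -> pref p b c -> pref p a c).

Definition strict_pref (pref : 'I_m -> rel 'I_n) p a b : bool :=
  pref p a b && ~~ pref p b a.

(* An allocation (ordered partition of P into n bundles) is encoded by the
   function sending each player to her team. *)
Definition allocation := {ffun 'I_m -> 'I_n}.

Definition bundle (A : allocation) (i : 'I_n) : {set 'I_m} := [set p | A p == i].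

Definition value (v : 'I_n -> 'I_m -> R) (i : 'I_n) (S : {set 'I_m}) : R :=
  \sum_(p in S) v i p.

Definition EF1 (v : 'I_n -> 'I_m -> R) (A : allocation) : Prop :=
  forall i j : 'I_n, i != j ->
    exists X Y : {set 'I_m},
      [/\ X \subset bundle A i, Y \subset bundle A j, (#|X :|: Y| <= 1)%N &
          value v i (bundle A j :\: Y) <= value v i (bundle A i :\: X)].

Definition better_off pref (A' A : allocation) p := strict_pref pref p (A' p) (A p).
Definition worse_off pref (A' A : allocation) p := strict_pref pref p (A p) (A' p).

Definition player_dominated pref (A A' : allocation) : Prop :=
  (forall p, ~~ worse_off pref A' A p) /\ (exists p, better_off pref A' A p).

Definition player_PO pref (A : allocation) : Prop :=
  forall A' : allocation, ~ player_dominated pref A A'.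
End Alloc.

(* Main.v *)
Require Import Defs.
From HB Require Import structures.
From mathcomp Require Import all_boot all_order all_algebra.
From mathcomp Require Import reals.
Import Order.TTheory GRing.Theory Num.Theory.
Local Open Scope ring_scope.

Theorem proposition5 (R : realType) :
  exists (m : nat) (pref : 'I_m -> rel 'I_2) (v : 'I_2 -> 'I_m -> R),
    [/\ weak_order_prefs pref,
        (forall (i : 'I_2) (p : 'I_m), 0 <= v i p),
        (forall i j : 'I_2, v i = v j) &
        forall A : allocation 2 m, ~ (EF1 v A /\ player_PO pref A)].
Proof.
exists 2%N, (fun _ (a b : 'I_2) => (a <= b)%N), (fun _ _ => 1).
split.
- move=> p; split; first by move=> a b; exact: leq_total.
  by move=> a b c; exact: leq_trans.
- by move=> *; exact: ler01.
- by [].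
move=> A [hEF hPO].
have hneq : A ord0 != A (lift ord0 ord0).
  apply/negP => /eqP heq.
  set i := A ord0.
  pose j : 'I_2 := if i == ord0 then lift ord0 ord0 else ord0.
  have hji : j != i.
    rewrite /j; case: (i =P ord0) => [->|]; first by [].
    by move=> h; apply/eqP => hh; apply: h; rewrite hh.
  have hbi : bundle A i = setT.
    apply/setP => p; rewrite !inE; case: p => [[|[|k]] Hk] //.
    + by apply/eqP; congr (A _); apply: val_inj.
    + by apply/eqP; rewrite /i heq; congr (A _); apply: val_inj.
  have hbj : bundle A j = set0.
    apply/setP => p; rewrite !inE; apply/negP => /eqP hp.
    have : p \in bundle A i by rewrite hbi inE.
    by rewrite inE hp (negbTE hji).
  have [X [Y [_ _ hc hv]]] := hEF j i hji.
  move: hv; rewrite hbi hbj set0D /value big_set0 sumr_const.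
  have hY : (#|Y| <= 1)%N by apply: leq_trans hc; apply: subset_leq_card; exact: subsetUr.
  have : (1 <= #|setT :\: Y|)%N.
    rewrite setTD cardsCs setCK card_ord. by case: #|Y| hY => [|[|]].
  by move=> h0; rewrite leNgt ltr0n h0.
pose A' : allocation 2 2 := [ffun=> ord0].
apply: (hPO A'); split.
- move=> p; rewrite /worse_off /strict_pref /A' ffunE.
  by case: (A p) => [[|[|k]] Hk].
- move: hneq.
  case h0: (A ord0) => [[|[|k]] H0]; case h1: (A (lift ord0 ord0)) => [[|[|k']] H1] //= _.
  + by exists (lift ord0 ord0); rewrite /better_off /strict_pref /A' ffunE h1.
  + by exists ord0; rewrite /better_off /strict_pref /A' ffunE h0.
Qed.
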